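(* Let $k\ge 3$ and let $w$ be a word over $\{a,b\}$. Let $p,q\in\{u,v\}$ be two consecutive, non-overlapping occurrences in $w$ (with $p$ occurring before $q$), and let $pxq$ be the corresponding factor of $w$, where $|x|\ge 0$. Let $F_p,F_q\subseteq\{0,\dots,k-1\}$ be the sets of forbidden local positions in $p$ and $q$ respectively. Then $$F_p\subseteq\{(j+|x|)\bmod k \mid j\in F_q\}\cup\{0\}.$$
   Context: $\Sigma=\{a,b\}$. For $k\ge 3$, $S_k=\left(\Sigma^k\setminus\{ba^{k-1},b^{k-1}a\}\right)\cup\left(\Sigma^{k-1}\setminus\{a^{k-1},b^{k-1}\}\right)$, $u=ba^{k-1}$, $v=b^{k-1}a$. $\mathit{Pref}(S^* )$ denotes the set of all prefixes of words in $S^*$. For $w=w_1\cdots w_n$, $w[i..j]=w_i\cdots w_j$ (empty if $i>j$). A position $j$, $0\le j\le n-1$, is forbidden in $w$ if $w[j+1..n]\notin\mathit{Pref}(S_k^* )$. An occurrence of $p\in\{u,v\}$ in $w$ is an index $s$ with $w[s+1..s+k]=p$; local position $i\in\{0,\dots,k-1\}$ of the occurrence is the position $s+i$ of $w$, and it is forbidden in the occurrence if $s+i$ is forbidden in $w$. Two occurrences of words from $\{u,v\}$ starting at $s<t$ overlap if $t<s+k$; they are consecutive if either they overlap or they are the only occurrences of $u$ or $v$ lying inside the factor $w[s+1..t+k]$. *)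

(* Defs.v *)
From mathcomp Require Import all_boot.
Set Implicit Arguments. Unset Strict Implicit. Unset Printing Implicit Defensive.

Definition la : bool := false.
Definition lb : bool := true.
Definition word := seq bool.

Definition uw (k : nat) : word := lb :: nseq k.-1 la.
Definition vw (k : nat) : word := nseq k.-1 lb ++ [:: la].

Definition inS (k : nat) (s : word) : bool :=
  ((size s == k) && (s != uw k) && (s != vw k))
  || ((size s == k.-1) && (s != nseq k.-1 la) && (s != nseq k.-1 lb)).

Definition inPrefSstar (k : nat) (w : word) : Prop :=
  exists ws : seq word, all (inS k) ws /\ prefix w (flatten ws).

(* position j (0 <= j <= |w|-1) is forbidden in w: w[j+1..n] \notin Pref(S_k^* ) *)
Definition forbidden (k : nat) (w : word) (j : nat) : Prop :=
  j < size w /\ ~ inPrefSstar k (drop j w).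

Definition occ (k : nat) (w : word) (s : nat) : bool :=
  (take k (drop s w) == uw k) || (take k (drop s w) == vw k).

(* Main.v *)
Require Import Defs.
From mathcomp Require Import all_boot.
From Stdlib Require Import Lia.

Ltac tolia := repeat match goal with
  | H : is_true (_ <= _) |- _ => move/leP: H => H
  | H : is_true (_ < _) |- _ => move/ltP: H => H
  | H : is_true (_ == _) |- _ => move/eqP: H => H
  | H : is_true (_ != _) |- _ => move/eqP: H => H
  end; rewrite -?(rwP leP) -?(rwP ltP) -?(rwP eqP);
  unfold addn, subn, muln, addn_rec, subn_rec, muln_rec in *; lia.

Lemma step k w r : 0 < k -> r + k <= size w -> ~~ occ k w r ->
  inPrefSstar k (drop (r + k) w) -> inPrefSstar k (drop r w).
Proof.
move=> k0 hs hocc [ws [hall hpre]].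
exists (take k (drop r w) :: ws); split.
  rewrite /= hall andbT /inS.
  move: hocc; rewrite /occ negb_or => /andP[h1 h2].
  by rewrite size_takel ?size_drop ?leq_subRL ?(leq_trans _ hs) ?leq_addr // eqxx h1 h2.
rewrite {1}(_ : drop r w = take k (drop r w) ++ drop (r + k) w); last by rewrite -{1}(cat_take_drop k (drop r w)) drop_drop addnC.
case/prefixP: hpre => z hz /=. rewrite hz catA. by rewrite prefix_prefix.
Qed.

Lemma iter_step k w N : 0 < k -> forall a,
  (forall c, c < N -> a + c * k + k <= size w /\ ~~ occ k w (a + c * k)) ->
  inPrefSstar k (drop (a + N * k) w) -> inPrefSstar k (drop a w).
Proof.
move=> k0; elim: N => [|N IH] a h.
  by rewrite mul0n addn0.
move=> hp.
have [h1 h2] := h 0 (ltn0Sn _).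
rewrite mul0n addn0 in h1 h2.
apply: step => //.
apply: IH.
  move=> c hc; have := h c.+1 hc.
  have -> : a + c.+1 * k = a + k + c * k by rewrite mulSn; tolia.
  done.
by move: hp; rewrite mulSn addnA.
Qed.

Theorem lemma3 (k : nat) (hk : 3 <= k) (w : word) (s t : nat) :
  occ k w s -> occ k w t -> s + k <= t ->
  (forall r, occ k w r -> s <= r -> r + k <= t + k -> r = s \/ r = t) ->
  forall i, i < k -> forbidden k w (s + i) ->
    i = 0 \/ exists2 j, j < k & forbidden k w (t + j) /\ i = (j + (t - s - k)) %% k.
Proof.
move=> hs ht hst hcons i hi [_ hfs].
have k0 : 0 < k by apply: leq_trans hk.
have htsz : t + k <= size w.
  have : size (take k (drop t w)) = k.
    by move: ht; rewrite /occ => /orP[] /eqP ->; rewrite /= ?size_cat size_nseq /=; tolia.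
  rewrite size_take size_drop; case: ifP => //; tolia.
case: (eqVneq i 0) => [->|inz]; first by left.
right.
have key : forall N j, j < k -> s + i + N * k = t + j ->
    j < k /\ forbidden k w (t + j) /\ i = (j + (t - s - k)) %% k.
  move=> N j hj hN.
  have N1 : 0 < N.
    case: N hN => // hN; rewrite mul0n addn0 in hN; tolia.
  split => //; split; last first.
    have -> : j + (t - s - k) = (N.-1) * k + i.
      case: N N1 hN => // N' _ hN /=. rewrite mulSn in hN. tolia.
    by rewrite modnMDl modn_small.
  split; first by tolia.
  move=> hp; apply: hfs.
  apply: (@iter_step k w N k0); last by rewrite hN.
  move=> c hc; split.
    have : c * k + k <= N * k by rewrite -mulSnr leq_mul2r hc orbT.
    tolia.
  apply/negP => ho.
  have hck : c * k + k <= N * k by rewrite -mulSnr leq_mul2r hc orbT.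
  case: (hcons _ ho).
  - tolia.
  - tolia.
  - tolia.
  - tolia.
have [D hDdef] : exists D, D = t - (s + i) by exists (t - (s + i)).
have hD := divn_eq D k.
case: (eqVneq (D %% k) 0) => hr.
  have [h1 [h2 h3]] := key (D %/ k) 0 k0 ltac:(rewrite hr addn0 in hD; tolia).
  by exists 0.
have hrk : D %% k < k by rewrite ltn_mod.
have [h1 [h2 h3]] := key (D %/ k).+1 (k - D %% k) ltac:(tolia)
  ltac:(rewrite mulSn; tolia).
by exists (k - D %% k).
Qed.
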